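(* Let $R$ be a commutative ring with identity, $I,J$ ideals of $R$, and $N$ an injective cogenerator of the category of $R$-modules. If $N$ is $I$-reduced, then $N$ is $I$-coreduced. If $N$ is $(I,J)$-prime, then $N$ is $(I,J)$-coprime.
   Context: All rings are commutative with identity and modules are unital. An $R$-module $M$ is $I$-reduced if for all $m\in M$, $I^2m=0$ implies $Im=0$; $I$-coreduced if $IM=I^2M$; $(I,J)$-prime if for all $m\in M$, $IJm=0$ implies $Im=0$ or $Jm=0$; $(I,J)$-coprime if $IJM=IM$ or $IJM=JM$. *)

(* Defs.v *)
From HB Require Import structures.
From mathcomp Require Import all_boot all_order all_algebra.
Import GRing.Theory.
Local Open Scope ring_scope.

(* Modules over a commutative ring R are MathComp's [lmodType R]
   (unital by the axiom scale1r).  Ideals are Prop-valued subsets of R. *)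

Definition is_ideal {R : comPzRingType} (I : R -> Prop) : Prop :=
  [/\ I 0,
      (forall x y, I x -> I y -> I (x + y)) &
      (forall r x, I x -> I (r * x))].

Definition ideal_mul {R : comPzRingType} (I J : R -> Prop) : R -> Prop :=
  fun r => exists s : seq (R * R),
    (forall p, p \in s -> I p.1 /\ J p.2) /\ r = \sum_(p <- s) p.1 * p.2.

Definition ideal_smul {R : comPzRingType} (M : lmodType R) (I : R -> Prop)
    : M -> Prop :=
  fun x => exists s : seq (R * M),
    (forall p, p \in s -> I p.1) /\ x = \sum_(p <- s) p.1 *: p.2.

Definition ann_by {R : comPzRingType} {M : lmodType R} (I : R -> Prop) (m : M)
    : Prop := forall a, I a -> a *: m = 0.

Definition seteqP_ {T : Type} (A B : T -> Prop) : Prop := forall x, A x <-> B x.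

Definition I_reduced {R : comPzRingType} (M : lmodType R) (I : R -> Prop) : Prop :=
  forall m : M, ann_by (ideal_mul I I) m -> ann_by I m.

Definition I_coreduced {R : comPzRingType} (M : lmodType R) (I : R -> Prop) : Prop :=
  seteqP_ (ideal_smul M I) (ideal_smul M (ideal_mul I I)).

Definition IJ_prime {R : comPzRingType} (M : lmodType R) (I J : R -> Prop) : Prop :=
  forall m : M, ann_by (ideal_mul I J) m -> ann_by I m \/ ann_by J m.

Definition IJ_coprime {R : comPzRingType} (M : lmodType R) (I J : R -> Prop) : Prop :=
  seteqP_ (ideal_smul M (ideal_mul I J)) (ideal_smul M I) \/
  seteqP_ (ideal_smul M (ideal_mul I J)) (ideal_smul M J).

Definition injective_module {R : comPzRingType} (N : lmodType R) : Prop :=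
  forall (A B : lmodType R) (f : {linear A -> B}) (g : {linear A -> N}),
    injective f ->
    exists h : {linear B -> N}, forall a, h (f a) = g a.

(* N is a cogenerator of R-Mod: Hom(-, N) is faithful, i.e. for every nonzero
   R-linear map f : A -> B there is an R-linear g : B -> N with g o f <> 0. *)
Definition cogenerator_module {R : comPzRingType} (N : lmodType R) : Prop :=
  forall (A B : lmodType R) (f : {linear A -> B}),
    (exists a, f a <> 0) ->
    exists (g : {linear B -> N}) (a : A), g (f a) <> 0.

(* Main.v *)
Require Import Defs.
From HB Require Import structures.
From mathcomp Require Import all_boot all_order all_algebra.
From mathcomp Require Import generic_quotient.
From Stdlib Require Import ClassicalEpsilon Classical.
Import GRing.Theory.
Local Open Scope ring_scope.
Local Open Scope quotient_scope.

Section Quot.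
Variables (R : comPzRingType) (M : lmodType R) (K : M -> Prop).
Hypotheses (K0 : K 0) (KD : forall x y, K x -> K y -> K (x + y))
  (KZ : forall a x, K x -> K (a *: x)).

Lemma KN x : K x -> K (- x).
Proof. by move=> Kx; rewrite -scaleN1r; apply: KZ. Qed.

Definition qe (x y : M) : bool :=
  if excluded_middle_informative (K (x - y)) then true else false.

Lemma qeP x y : reflect (K (x - y)) (qe x y).
Proof. by rewrite /qe; case: excluded_middle_informative => h; constructor. Qed.

Lemma qe_refl : reflexive qe.
Proof. by move=> x; apply/qeP; rewrite subrr. Qed.
Lemma qe_sym : symmetric qe.
Proof.
move=> x y; apply/qeP/qeP => h; by rewrite -opprB; apply: KN.
Qed.
Lemma qe_trans : transitive qe.
Proof.
move=> y x z /qeP h1 /qeP h2; apply/qeP.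
have -> : x - z = (x - y) + (y - z) by rewrite addrA subrK.
exact: KD.
Qed.

Canonical qe_equiv := EquivRel qe qe_refl qe_sym qe_trans.

Definition Q : Type := {eq_quot qe_equiv}.
HB.instance Definition _ := Choice.on Q.
HB.instance Definition _ := Quotient.on Q.

Definition qpi (x : M) : Q := \pi_Q x.

Lemma qpiP x y : qpi x = qpi y <-> K (x - y).
Proof.
have := @eqmodP _ qe_equiv x y; rewrite /qpi => h.
by split => [/h/qeP|/qeP/h].
Qed.

Lemma qpi_repr (q : Q) : qpi (repr q) = q.
Proof. exact: reprK. Qed.

Lemma qind (P : Q -> Prop) : (forall x, P (qpi x)) -> forall q, P q.
Proof. by move=> h q; rewrite -(qpi_repr q). Qed.

Definition qzero : Q := qpi 0.
Definition qadd (p q : Q) : Q := qpi (repr p + repr q).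
Definition qopp (p : Q) : Q := qpi (- repr p).
Definition qscale (a : R) (p : Q) : Q := qpi (a *: repr p).

Lemma Krepr x : K (repr (qpi x) - x).
Proof. by apply/qpiP; rewrite qpi_repr. Qed.

Lemma qaddE x y : qadd (qpi x) (qpi y) = qpi (x + y).
Proof.
apply/qpiP; have -> : repr (qpi x) + repr (qpi y) - (x + y)
  = (repr (qpi x) - x) + (repr (qpi y) - y) by rewrite opprD addrACA.
by apply: KD; apply: Krepr.
Qed.

Lemma qoppE x : qopp (qpi x) = qpi (- x).
Proof. by apply/qpiP; rewrite -opprD; apply: KN; apply: Krepr. Qed.

Lemma qscaleE a x : qscale a (qpi x) = qpi (a *: x).
Proof. by apply/qpiP; rewrite -scalerBr; apply: KZ; apply: Krepr. Qed.

Lemma qaddA : associative qadd.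
Proof.
by elim/qind => x; elim/qind => y; elim/qind => z; rewrite !qaddE addrA.
Qed.
Lemma qaddC : commutative qadd.
Proof. by elim/qind => x; elim/qind => y; rewrite !qaddE addrC. Qed.
Lemma qadd0 : left_id qzero qadd.
Proof. by elim/qind => x; rewrite /qzero qaddE add0r. Qed.
Lemma qaddN : left_inverse qzero qopp qadd.
Proof. by elim/qind => x; rewrite qoppE qaddE addNr. Qed.

HB.instance Definition _ := GRing.isZmodule.Build Q qaddA qaddC qadd0 qaddN.

Lemma qscaleA a b v : qscale a (qscale b v) = qscale (a * b) v.
Proof. by elim/qind: v => x; rewrite !qscaleE scalerA. Qed.
Lemma qscale1 : left_id 1 qscale.
Proof. by elim/qind => x; rewrite qscaleE scale1r. Qed.
Lemma qscaleDr : right_distributive qscale +%R.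
Proof.
move=> a; elim/qind => x; elim/qind => y.
change (qscale a (qadd (qpi x) (qpi y)) = qadd (qscale a (qpi x)) (qscale a (qpi y))).
by rewrite qaddE !qscaleE qaddE scalerDr.
Qed.
Lemma qscaleDl v : {morph qscale^~ v : a b / a + b}.
Proof. move=> a b; elim/qind: v => x.
change (qscale (a + b) (qpi x) = qadd (qscale a (qpi x)) (qscale b (qpi x))).
by rewrite !qscaleE qaddE scalerDl. Qed.

HB.instance Definition _ := GRing.Zmodule_isLmodule.Build R Q
  qscaleA qscale1 qscaleDr qscaleDl.

Lemma qpi_linear : linear qpi.
Proof. move=> a x y.
change (qpi (a *: x + y) = qadd (qscale a (qpi x)) (qpi y)).
by rewrite qscaleE qaddE. Qed.

HB.instance Definition _ := GRing.isLinear.Build R M Q *:%R qpi qpi_linear.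

Lemma qpi_eq0 x : qpi x = 0 <-> K x.
Proof. by rewrite -/(qzero) /qzero qpiP subr0. Qed.

End Quot.

Section Scal.
Variables (R : comPzRingType) (V : lmodType R) (v : V).
Definition scal_to (r : R^o) : V := r *: v.
Lemma scal_to_linear : linear scal_to.
Proof. by move=> a x y; rewrite /scal_to scalerDl scalerA. Qed.
HB.instance Definition _ := GRing.isLinear.Build _ _ _ _ scal_to scal_to_linear.
End Scal.

Section Smul.
Variables (R : comPzRingType) (M : lmodType R).

Lemma smul0 (P : R -> Prop) : ideal_smul M P 0.
Proof. by exists [::]; split => //; rewrite big_nil. Qed.

Lemma smulD (P : R -> Prop) x y :
  ideal_smul M P x -> ideal_smul M P y -> ideal_smul M P (x + y).
Proof.
move=> [s [hs ->]] [t [ht ->]]; exists (s ++ t); split; last by rewrite big_cat.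
by move=> p; rewrite mem_cat => /orP [/hs|/ht].
Qed.

Lemma smulZ (P : R -> Prop) a x : ideal_smul M P x -> ideal_smul M P (a *: x).
Proof.
move=> [s [hs ->]]; exists [seq (p.1, a *: p.2) | p <- s]; split.
  by move=> p /mapP [q /hs hq ->].
rewrite big_map scaler_sumr; apply: eq_bigr => p _.
by rewrite /= !scalerA mulrC.
Qed.

Lemma smul1 (P : R -> Prop) a m : P a -> ideal_smul M P (a *: m).
Proof.
move=> Pa; exists [:: (a, m)]; split; last by rewrite big_seq1.
by move=> p; rewrite inE => /eqP ->.
Qed.

Lemma smul_sum (P : R -> Prop) (T : eqType) (s : seq T) (F : T -> M) :
  (forall t, t \in s -> ideal_smul M P (F t)) ->
  ideal_smul M P (\sum_(t <- s) F t).
Proof.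
elim: s => [|t s IH] h; first by rewrite big_nil; apply: smul0.
rewrite big_cons; apply: smulD; first by apply: h; rewrite inE eqxx.
by apply: IH => u hu; apply: h; rewrite inE hu orbT.
Qed.

Lemma smul_mul_l (I J : R -> Prop) x :
  ideal_smul M (ideal_mul I J) x -> ideal_smul M I x.
Proof.
move=> [s [hs ->]]; apply: smul_sum => p /hs [t [ht ->]].
rewrite scaler_suml; apply: smul_sum => q /ht [hq _].
by rewrite -scalerA; apply: smul1.
Qed.

Lemma smul_mul_r (I J : R -> Prop) x :
  ideal_smul M (ideal_mul I J) x -> ideal_smul M J x.
Proof.
move=> [s [hs ->]]; apply: smul_sum => p /hs [t [ht ->]].
rewrite scaler_suml; apply: smul_sum => q /ht [_ hq].
by rewrite mulrC -scalerA; apply: smul1.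
Qed.

End Smul.

Lemma hit (R : comPzRingType) (N : lmodType R) (P Q : R -> Prop) (x : N) :
  cogenerator_module N -> ideal_smul N P x -> ~ ideal_smul N Q x ->
  exists (m : N) (a : R), ann_by Q m /\ P a /\ a *: m <> 0.
Proof.
move=> cog hx nx.
pose K := ideal_smul N Q.
have K0 : K 0 by apply: smul0.
have KD : forall u v, K u -> K v -> K (u + v) by move=> u v; apply: smulD.
have KZ : forall a u, K u -> K (a *: u) by move=> a u; apply: smulZ.
pose pi := @qpi R N K K0 KD KZ.
have piK : forall u, pi u = 0 <-> K u by move=> u; apply: qpi_eq0.
have [] := cog R^o _ (@scal_to R _ (pi x)).
  exists 1; change ((1 : R) *: pi x <> 0); rewrite scale1r => /piK; exact: nx.
move=> g [r]; rewrite /scal_to linearZ /= => hr.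
have gx : g (pi x) <> 0 by move=> h; apply: hr; rewrite h scaler0.
move: hx gx => [s [hs ->]].
rewrite /pi raddf_sum raddf_sum -/pi => hs0.
have [p ps hp] : exists2 p, p \in s & g (pi (p.1 *: p.2)) <> 0.
  apply: NNPP => hn; apply: hs0; apply: big1_seq => p /andP [_ ps].
  by apply: NNPP => hp; apply: hn; exists p.
exists (g (pi p.2)), p.1; split; [|split].
- move=> b Qb.
  have e : pi (b *: p.2) = b *: pi p.2 by rewrite /pi linearZ.
  rewrite -linearZ -e.
  have -> : pi (b *: p.2) = 0 by apply/piK; apply: smul1.
  by rewrite linear0.
- exact: hs.
- have e : pi (p.1 *: p.2) = p.1 *: pi p.2 by rewrite /pi linearZ.
  by rewrite -linearZ -e.
Qed.

Theorem mainTheorem7 (R : comPzRingType) (I J : R -> Prop) (N : lmodType R) :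
  is_ideal I -> is_ideal J ->
  injective_module N -> cogenerator_module N ->
  (I_reduced N I -> I_coreduced N I) /\
  (IJ_prime N I J -> IJ_coprime N I J).
Proof.
move=> _ _ _ cog; split.
  move=> red x; split; last exact: smul_mul_l.
  move=> hx; apply: NNPP => nx.
  have [m [a [ann [Ia ne]]]] := @hit _ _ _ _ _ cog hx nx.
  by apply: ne; apply: (red m ann).
move=> pr; apply: NNPP => nc.
have [x [hx nx]] : exists x, ideal_smul N I x /\ ~ ideal_smul N (ideal_mul I J) x.
  apply: NNPP => h; apply: nc; left => x; split; first exact: smul_mul_l.
  by move=> hx; apply: NNPP => nx; apply: h; exists x.
have [y [hy ny]] : exists y, ideal_smul N J y /\ ~ ideal_smul N (ideal_mul I J) y.
  apply: NNPP => h; apply: nc; right => y; split; first exact: smul_mul_r.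
  by move=> hy; apply: NNPP => ny; apply: h; exists y.
have [m1 [a [ann1 [Ia ne1]]]] := @hit _ _ _ _ _ cog hx nx.
have [m2 [b [ann2 [Jb ne2]]]] := @hit _ _ _ _ _ cog hy ny.
have J1 : ann_by J m1 by case: (pr m1 ann1) => // h; case: ne1; apply: h.
have I2 : ann_by I m2 by case: (pr m2 ann2) => // h; case: ne2; apply: h.
have ann : ann_by (ideal_mul I J) (m1 + m2).
  by move=> c hc; rewrite scalerDr ann1 // ann2 // addr0.
case: (pr _ ann) => h.
  by apply: ne1; have := h a Ia; rewrite scalerDr I2 // addr0.
by apply: ne2; have := h b Jb; rewrite scalerDr J1 // add0r.
Qed.
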